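(* In the two-type setting, suppose $\phi_1\sigma>1$, and let $r=\inf\{\lambda_1(p):p\in(0,\bar p_1]\times[0,\bar p_2]\}$. Let $p^0\in(0,1)^2$ with $p^0_1+p^0_2\le1$ and $p^n=h^n(p^0)$. Then there is $\bar c\in(0,p^0_1)$ such that for every $c\in(0,\bar c]$ there is $\bar k\in\mathbb N$ with the property: for all $n\in\mathbb N$, if $p^n_1\ge c$ then there is $k\le\bar k$ with $p^{n+k}_1>\frac{3}{2r}c$.
   Context: Two-type limiting map: $\beta_1,\beta_2>0$, $\alpha(1),\alpha(2)\in[0,1)$, $\phi_i=(1-\alpha(i))\beta_i$. For $p\in[0,1]^2$, $S(p)=\beta_1p_1+\beta_2p_2$ and $f^{(i)}(p)=(1-e^{-S(p)})\beta_ip_i/S(p)$ ($=0$ if $S(p)=0$). For $\alpha\in(0,1)$ let $g_\alpha(x)=\frac{(1-\sqrt{1-4(1-\alpha)x(1-x)})^3}{8(1-\alpha)^2x^2}$ for $x\in(0,1]$ and $g_\alpha(0)=0$; let $g_0(x)=x$ for $x\le1/2$ and $g_0(x)=(1-x)^3/x^2$ for $x>1/2$. $h(p)=(h_1(p),h_2(p))$ with $h_i(p)=g_{\alpha(i)}(f^{(i)}(p))$; $\lambda_i(p)=h_i(p)/p_i$ for $p_i>0$. $\bar p_i=\sup_{x\in[0,1]}g_{\alpha(i)}(x)$. $\psi(x)=(1-e^{-x})/x$, $\psi(0)=1$. For $x\in[0,1]$ let $\Psi_n(x)=\big(\prod_{k=0}^{n-1}\psi(\beta_2h^k_2(0,x))\big)^{1/n}$,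 $\underline\Psi(x)=\liminf_{n\to\infty}\Psi_n(x)$, and $\sigma=\inf_{x\in[0,\bar p_2]}\underline\Psi(x)$. *)

(* Defs.v *)
From Stdlib Require Import Reals Lra ClassicalEpsilon.
Open Scope R_scope.

Definition is_glb (E : R -> Prop) (m : R) : Prop :=
  (forall x, E x -> m <= x) /\ (forall b, (forall x, E x -> b <= x) -> b <= m).

(* sup / inf as functions (chosen by epsilon; meaningful when they exist). *)
Definition Rsup (E : R -> Prop) : R := epsilon (inhabits 0) (fun m => is_lub E m).
Definition Rinf (E : R -> Prop) : R := epsilon (inhabits 0) (fun m => is_glb E m).

Definition liminf (u : nat -> R) : R :=
  Rsup (fun y => exists N : nat, y = Rinf (fun z => exists n : nat, (N <= n)%nat /\ z = u n)).

Definition g (alpha x : R) : R :=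
  if Req_EM_T alpha 0 then
    (if Rle_dec x (1/2) then x else (1 - x) ^ 3 / x ^ 2)
  else
    (if Req_EM_T x 0 then 0
     else (1 - sqrt (1 - 4 * (1 - alpha) * x * (1 - x))) ^ 3
          / (8 * (1 - alpha) ^ 2 * x ^ 2)).

Definition S (b1 b2 : R) (p : R * R) : R := b1 * fst p + b2 * snd p.

Definition f1 (b1 b2 : R) (p : R * R) : R :=
  if Req_EM_T (S b1 b2 p) 0 then 0
  else (1 - exp (- S b1 b2 p)) * b1 * fst p / S b1 b2 p.
Definition f2 (b1 b2 : R) (p : R * R) : R :=
  if Req_EM_T (S b1 b2 p) 0 then 0
  else (1 - exp (- S b1 b2 p)) * b2 * snd p / S b1 b2 p.

Definition h (a1 a2 b1 b2 : R) (p : R * R) : R * R :=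
  (g a1 (f1 b1 b2 p), g a2 (f2 b1 b2 p)).

Fixpoint h_iter (a1 a2 b1 b2 : R) (n : nat) (p : R * R) : R * R :=
  match n with
  | O => p
  | Datatypes.S m => h a1 a2 b1 b2 (h_iter a1 a2 b1 b2 m p)
  end.

Definition lambda1 (a1 a2 b1 b2 : R) (p : R * R) : R :=
  fst (h a1 a2 b1 b2 p) / fst p.

Definition pbar (alpha : R) : R :=
  Rsup (fun y => exists x, 0 <= x <= 1 /\ y = g alpha x).

Definition psi (x : R) : R := if Req_EM_T x 0 then 1 else (1 - exp (- x)) / x.

Fixpoint prod_psi (a1 a2 b1 b2 x : R) (n : nat) : R :=
  match n with
  | O => 1
  | Datatypes.S k =>
      prod_psi a1 a2 b1 b2 x k * psi (b2 * snd (h_iter a1 a2 b1 b2 k (0, x)))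
  end.

Definition Psi (a1 a2 b1 b2 x : R) (n : nat) : R :=
  Rpower (prod_psi a1 a2 b1 b2 x n) (1 / INR n).

Definition sigma_T (a1 a2 b1 b2 : R) : R :=
  Rinf (fun y => exists x, 0 <= x <= pbar a2 /\ y = liminf (Psi a1 a2 b1 b2 x)).

Definition rr (a1 a2 b1 b2 : R) : R :=
  Rinf (fun y => exists p : R * R,
          0 < fst p <= pbar a1 /\ 0 <= snd p <= pbar a2 /\ y = lambda1 a1 a2 b1 b2 p).

(* Main.v *)
Require Import Defs.
From Stdlib Require Import Reals Lra Lia ClassicalEpsilon Classical.
From Coquelicot Require Import Coquelicot.
Open Scope R_scope.

Lemma exp_neg_ge t : 1 - t <= exp (- t).
Proof. pose proof (exp_ineq1_le (-t)); lra. Qed.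

Lemma exp_pos_le1 t : 0 <= t -> 0 < exp (-t) <= 1.
Proof. intros. split. apply exp_pos. rewrite <- exp_0.
 destruct (Req_dec t 0). subst. rewrite Ropp_0. lra.
 left; apply exp_increasing; lra. Qed.

Lemma exp_mul_inv t : exp t * exp (- t) = 1.
Proof. rewrite <- exp_plus. replace (t + - t) with 0 by ring. apply exp_0. Qed.

Lemma le_div L N D : 0 < D -> L * D <= N -> L <= N / D.
Proof. intros. unfold Rdiv. replace L with (L*D*/D) by (field; lra).
 apply Rmult_le_compat_r. left; apply Rinv_0_lt_compat; lra. lra. Qed.

Lemma div_le L N D : 0 < D -> N <= L * D -> N / D <= L.
Proof. intros. unfold Rdiv. replace L with (L*D*/D) by (field; lra).
 apply Rmult_le_compat_r. left; apply Rinv_0_lt_compat; lra. lra. Qed.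

Lemma psi_pos x : 0 < x -> psi x = (1 - exp (-x)) / x.
Proof. intros. unfold psi. destruct (Req_EM_T x 0); [lra|auto]. Qed.

Lemma psi_mul x : 0 <= x -> psi x * x = 1 - exp (- x).
Proof. intros. unfold psi. destruct (Req_EM_T x 0).
 subst. rewrite Ropp_0, exp_0. ring. field. auto. Qed.

Lemma psi_bounds x : 0 <= x -> 0 < psi x <= 1.
Proof. intros. unfold psi. destruct (Req_EM_T x 0). lra.
 pose proof (exp_neg_ge x). pose proof (exp_pos_le1 x H).
 assert (exp (-x) < 1). { rewrite <- exp_0. apply exp_increasing. lra. }
 split. apply Rdiv_lt_0_compat; lra. apply div_le; lra. Qed.

Lemma psi_shift u d : 0 <= u -> 0 <= d -> psi u * exp (- d) <= psi (u + d).
Proof. intros Hu Hd. pose proof (exp_mul_inv d) as Ed. pose proof (exp_ineq1_le d) as Id.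
 pose proof (exp_pos_le1 d Hd) as Bd.
 destruct (Req_dec d 0). subst. rewrite Ropp_0, exp_0, Rplus_0_r. lra.
 destruct (Req_dec u 0). subst. rewrite Rplus_0_l. unfold psi at 1.
 destruct (Req_EM_T 0 0); [|lra]. rewrite psi_pos by lra. apply le_div. lra.
 nra.
 pose proof (exp_mul_inv u) as Eu. pose proof (exp_ineq1_le u) as Iu.
 pose proof (exp_pos_le1 u Hu) as Bu. pose proof (exp_neg_ge u) as Nu.
 rewrite !psi_pos by lra.
 replace (- (u + d)) with (-u + -d) by ring. rewrite exp_plus.
 set (A := exp (-u)) in *. set (B := exp (-d)) in *.
 set (X := (1 - A) / u). assert (HX : X * u = 1 - A) by (unfold X; field; lra).
 assert (X <= 1) by (apply div_le; lra).
 assert (0 <= X) by (unfold X; apply Rmult_le_pos; [lra| left; apply Rinv_0_lt_compat; lra]).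
 apply le_div. lra.
 assert (B * d <= 1 - B) by nra.
 assert (B * X * d <= 1 - B) by nra.
 nra. Qed.

Lemma psi_dec u v : 0 <= u -> u <= v -> psi v <= psi u.
Proof. intros Hu Huv. destruct (Req_dec u 0). subst. unfold psi at 2.
 destruct (Req_EM_T 0 0); [|lra]. apply psi_bounds; lra.
 destruct (Req_dec u v). subst; lra.
 rewrite !psi_pos by lra.
 set (d := v - u). replace v with (u + d) by (unfold d; ring).
 assert (Hd : 0 < d) by (unfold d; lra).
 pose proof (exp_mul_inv u) as Eu. pose proof (exp_ineq1_le u) as Iu.
 pose proof (exp_pos_le1 u) as Bu. pose proof (exp_neg_ge d) as Nd.
 pose proof (exp_pos_le1 d) as Bd.
 replace (- (u + d)) with (-u + -d) by ring. rewrite exp_plus.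
 set (A := exp (-u)) in *. set (B := exp (-d)) in *.
 assert (0 < A <= 1) by (apply Bu; lra). assert (0 < B <= 1) by (apply Bd; lra).
 set (X := (1 - A) / u). assert (HX : X * u = 1 - A) by (unfold X; field; lra).
 apply div_le. lra.
 assert (A * (1 + u) <= 1) by nra.
 assert (u * A * (1 - B) <= (1-A) * d) by nra.
 nra. Qed.

Lemma psi_lower u v : 0 <= u -> 0 <= v -> psi u * exp (- Rabs (v - u)) <= psi v.
Proof. intros. destruct (Rle_dec u v).
 rewrite Rabs_right by lra. replace v with (u + (v - u)) at 2 by ring. apply psi_shift; lra.
 pose proof (psi_dec v u H0 ltac:(lra)). pose proof (psi_bounds u H).
 pose proof (exp_pos_le1 (Rabs (v-u)) (Rabs_pos _)). nra. Qed.

Lemma g_zero a : g a 0 = 0.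
Proof. unfold g. destruct (Req_EM_T a 0). destruct (Rle_dec 0 (1/2)); [auto|lra].
 destruct (Req_EM_T 0 0); [auto|lra]. Qed.

Lemma sq_facts a x : 0 <= a < 1 -> 0 <= x <= 1 ->
  let u := 4 * (1 - a) * x * (1 - x) in
  0 <= u <= 1 - a /\ u / 2 <= 1 - sqrt (1 - u) <= u.
Proof. intros Ha Hx u.
 assert (0 <= u <= 1 - a). { unfold u. split. apply Rmult_le_pos. nra. lra.
   assert (4 * x * (1-x) <= 1) by (pose proof (pow2_ge_0 (2*x-1)); simpl in *; nra).
   replace (4 * (1 - a) * x * (1 - x)) with ((1-a) * (4 * x * (1-x))) by ring.
   replace (1 - a) with ((1-a)*1) at 2 by ring. apply Rmult_le_compat_l; lra. }
 split; auto. pose proof (sqrt_pos (1 - u)). pose proof (sqrt_sqrt (1-u) ltac:(lra)).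
 assert (sqrt (1-u) <= 1). { replace 1 with (sqrt 1) at 2 by apply sqrt_1. apply sqrt_le_1_alt. lra. }
 split.
 destruct (Rle_dec (sqrt (1-u)) (1 - u/2)). lra.
 assert ((1-u/2)*(1-u/2) < sqrt (1-u) * sqrt (1-u)) by (apply Rmult_le_0_lt_compat; lra). nra.
 nra. Qed.

Lemma g_bounds a x : 0 <= a < 1 -> 0 <= x <= 1 -> 0 <= g a x <= 8 * x.
Proof. intros Ha Hx. unfold g. destruct (Req_EM_T a 0).
 destruct (Rle_dec x (1/2)). lra.
 assert (0 < x^2) by nra. assert (0 <= (1-x)^3) by (apply pow_le; lra).
 split. apply Rmult_le_pos. auto. left; apply Rinv_0_lt_compat; auto.
 apply div_le; auto. assert ((1-x)^3 <= (1-x)).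
 { replace ((1-x)^3) with ((1-x)*((1-x)*(1-x))) by ring.
   assert ((1-x)*(1-x) <= 1) by nra. assert (0 <= 1-x) by lra. nra. }
 assert (1/8 <= x^3) by (simpl; nra). simpl in *. nra.
 destruct (Req_EM_T x 0). lra.
 destruct (sq_facts a x Ha Hx) as [Hu [H1 H2]].
 set (u := 4 * (1 - a) * x * (1 - x)) in *.
 set (s := 1 - sqrt (1 - u)) in *.
 assert (0 < 8 * (1 - a) ^ 2 * x ^ 2). { assert (0 < 1 - a) by lra. assert (0 < x) by lra.
   apply Rmult_lt_0_compat. apply Rmult_lt_0_compat. lra. apply pow_lt; lra. apply pow_lt; lra. }
 assert (0 <= s) by lra.
 split. apply Rmult_le_pos. apply pow_le; lra. left; apply Rinv_0_lt_compat; auto.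
 apply div_le; auto.
 assert (s^3 <= u^3). { apply pow_incr. lra. }
 assert (u^3 = 64 * (1-a)^3 * x^3 * (1-x)^3) by (unfold u; ring).
 assert ((1-a)^3 <= (1-a)^2) by (simpl; nra).
 assert ((1-x)^3 <= 1) by (rewrite <- (pow1 3); apply pow_incr; lra).
 assert (0 <= (1-x)^3) by (apply pow_le; lra).
 assert (0 <= (1-a)^2) by (apply pow_le; lra).
 assert (0 <= x^3) by (apply pow_le; lra).
 assert (0 <= (1-a)^3) by (apply pow_le; lra).
 assert ((1-a)^3 * (1-x)^3 <= (1-a)^2) by nra.
 assert (u^3 <= 64 * (1-a)^2 * x^3).
 { replace (64 * (1 - a) ^ 3 * x ^ 3 * (1 - x) ^ 3) with (64 * x^3 * ((1-a)^3 * (1-x)^3)) in * by ring.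
   nra. }
 assert (8 * x * (8 * (1 - a) ^ 2 * x ^ 2) = 64 * (1-a)^2 * x^3) by ring.
 lra. Qed.

Lemma g_lower a x : 0 <= a < 1 -> 0 <= x <= 1/2 -> (1 - a) * x * (1 - x)^3 <= g a x.
Proof. intros Ha Hx. unfold g. destruct (Req_EM_T a 0).
 subst. destruct (Rle_dec x (1/2)); [|lra].
 assert ((1-x)^3 <= 1) by (rewrite <- (pow1 3); apply pow_incr; lra).
 assert (0 <= (1-x)^3) by (apply pow_le; lra). nra.
 destruct (Req_EM_T x 0). subst. lra.
 destruct (sq_facts a x Ha ltac:(lra)) as [Hu [H1 H2]].
 set (u := 4 * (1 - a) * x * (1 - x)) in *.
 set (s := 1 - sqrt (1 - u)) in *.
 assert (0 < 8 * (1 - a) ^ 2 * x ^ 2). { assert (0 < 1 - a) by lra. assert (0 < x) by lra.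
   apply Rmult_lt_0_compat. apply Rmult_lt_0_compat. lra. apply pow_lt; lra. apply pow_lt; lra. }
 apply le_div; auto.
 assert ((u/2)^3 <= s^3). { apply pow_incr. lra. }
 assert ((u/2)^3 = (1 - a) * x * (1 - x) ^ 3 * (8 * (1 - a) ^ 2 * x ^ 2)) by (unfold u; field).
 lra. Qed.

Lemma cont_of_derive (F : R -> R) z : ex_derive F z -> forall eps, 0 < eps ->
  exists del, 0 < del /\ forall x, Rabs (x - z) < del -> Rabs (F x - F z) < eps.
Proof. intros Hd eps He. pose proof (ex_derive_continuous F z Hd) as Hc.
 apply continuity_pt_filterlim in Hc.
 destruct (Hc eps He) as [alp [Ha Hx]]. exists alp. split. lra.
 intros x Hxz. destruct (Req_dec x z). subst. rewrite Rminus_diag, Rabs_R0. lra.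
 apply (Hx x). split. split. constructor. auto. exact Hxz. Qed.

Definition G1 a x := (1 - sqrt (1 - 4 * (1 - a) * x * (1 - x))) ^ 3 / (8 * (1 - a) ^ 2 * x ^ 2).
Definition G0 x := (1 - x) ^ 3 / x ^ 2.

Lemma g_cont a z : 0 <= a < 1 -> 0 <= z < 1 -> forall eps, 0 < eps ->
  exists del, 0 < del /\ forall x, 0 <= x <= 1 -> Rabs (x - z) < del -> Rabs (g a x - g a z) < eps.
Proof. intros Ha Hz eps He.
 destruct (Req_dec z 0).
 { subst. exists (eps/8). split. lra. intros x Hx Hxz. rewrite g_zero.
   pose proof (g_bounds a x Ha Hx). rewrite Rminus_0_r in *.
   rewrite Rabs_right in * by lra. lra. }
 destruct (Req_EM_T a 0) as [Ha0|Ha0].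
 - subst a. destruct (Rlt_dec z (1/2)).
   + exists (Rmin eps (1/2 - z)). split. apply Rmin_pos; lra. intros x Hx Hxz.
     pose proof (Rmin_l eps (1/2 - z)). pose proof (Rmin_r eps (1/2 - z)).
     unfold g. destruct (Req_EM_T 0 0); [|lra].
     apply Rabs_def2 in Hxz.
     destruct (Rle_dec x (1/2)); [|lra]. destruct (Rle_dec z (1/2)); [|lra].
     apply Rabs_def1; lra.
   + assert (HD : ex_derive G0 z) by (unfold G0; auto_derive; nra).
     destruct (cont_of_derive G0 z HD eps He) as [d1 [Hd1 Hc]].
     destruct (Req_dec z (1/2)).
     * subst z. exists (Rmin eps d1). split. apply Rmin_pos; lra. intros x Hx Hxz.
       pose proof (Rmin_l eps d1). pose proof (Rmin_r eps d1).
       unfold g. destruct (Req_EM_T 0 0); [|lra].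
       destruct (Rle_dec (1/2) (1/2)); [|lra].
       destruct (Rle_dec x (1/2)). apply Rabs_def2 in Hxz. apply Rabs_def1; lra.
       specialize (Hc x ltac:(lra)). unfold G0 in Hc.
       replace ((1 - 1/2)^3 / (1/2)^2) with (1/2) in Hc by field. exact Hc.
     * exists (Rmin d1 (z - 1/2)). split. apply Rmin_pos; lra. intros x Hx Hxz.
       pose proof (Rmin_l d1 (z - 1/2)). pose proof (Rmin_r d1 (z-1/2)).
       apply Rabs_def2 in Hxz as Hxz'.
       unfold g. destruct (Req_EM_T 0 0); [|lra].
       destruct (Rle_dec x (1/2)); [lra|]. destruct (Rle_dec z (1/2)); [lra|].
       apply (Hc x). lra.
 - assert (HD : ex_derive (G1 a) z).
   { unfold G1. auto_derive. split.
     assert (4 * z * (1-z) <= 1) by (pose proof (pow2_ge_0 (2*z-1)); simpl in *; nra).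
     assert (0 < a) by lra. nra.
     split; [|auto]. assert (0 < 1 - a) by lra. assert (0 < z) by lra.
     apply Rgt_not_eq. apply Rmult_lt_0_compat. apply Rmult_lt_0_compat. lra. nra. nra. }
   destruct (cont_of_derive (G1 a) z HD eps He) as [d1 [Hd1 Hc]].
   exists (Rmin d1 z). split. apply Rmin_pos; lra. intros x Hx Hxz.
   pose proof (Rmin_l d1 z). pose proof (Rmin_r d1 z).
   apply Rabs_def2 in Hxz as Hxz'.
   unfold g. destruct (Req_EM_T a 0); [lra|].
   destruct (Req_EM_T x 0); [lra|]. destruct (Req_EM_T z 0); [lra|].
   apply (Hc x). lra.
Qed.

Definition quad (q : R * R) := 0 <= fst q /\ 0 <= snd q.

Lemma exp_lip s t : 0 <= s -> 0 <= t -> Rabs (exp (-s) - exp (-t)) <= Rabs (s - t).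
Proof. intros. 
 assert (forall s t, 0 <= s <= t -> 0 <= exp (-s) - exp (-t) <= t - s).
 { intros s' t' [H1 H2]. replace (- t') with (-s' + - (t' - s')) by ring. rewrite exp_plus.
   pose proof (exp_pos_le1 s' H1). pose proof (exp_pos_le1 (t'-s') ltac:(lra)).
   pose proof (exp_neg_ge (t' - s')). nra. }
 destruct (Rle_dec s t).
 specialize (H1 s t ltac:(lra)). rewrite Rabs_right by lra. rewrite Rabs_left1 by lra. lra.
 specialize (H1 t s ltac:(lra)). rewrite Rabs_left1 by lra. rewrite Rabs_right by lra. lra. Qed.

Section F.
Variables a1 a2 b1 b2 : R.
Hypothesis Hb1 : 0 < b1.
Hypothesis Hb2 : 0 < b2.
Hypothesis Ha1 : 0 <= a1 < 1.
Hypothesis Ha2 : 0 <= a2 < 1.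

Lemma S_nonneg q : quad q -> 0 <= S b1 b2 q.
Proof. intros [H1 H2]. unfold S. nra. Qed.

Lemma f1_eq q : quad q -> f1 b1 b2 q = psi (S b1 b2 q) * b1 * fst q.
Proof. intros Hq. pose proof (S_nonneg q Hq). destruct Hq as [H1 H2]. unfold f1.
 destruct (Req_EM_T (S b1 b2 q) 0) as [e|e].
 assert (fst q = 0) by (unfold S in e; nra). rewrite H0. ring.
 rewrite psi_pos by lra. field. auto. Qed.

Lemma f2_eq q : quad q -> f2 b1 b2 q = psi (S b1 b2 q) * b2 * snd q.
Proof. intros Hq. pose proof (S_nonneg q Hq). destruct Hq as [H1 H2]. unfold f2.
 destruct (Req_EM_T (S b1 b2 q) 0) as [e|e].
 assert (snd q = 0) by (unfold S in e; nra). rewrite H0. ring.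
 rewrite psi_pos by lra. field. auto. Qed.

Lemma f1_range q : quad q -> 0 <= f1 b1 b2 q <= 1 /\ f1 b1 b2 q <= b1 * fst q.
Proof. intros Hq. rewrite f1_eq by auto. pose proof (S_nonneg q Hq) as HS.
 pose proof (psi_bounds _ HS). pose proof (psi_mul _ HS).
 pose proof (exp_pos_le1 _ HS). destruct Hq as [Q1 Q2].
 assert (b1 * fst q <= S b1 b2 q) by (unfold S; nra).
 set (P := psi (S b1 b2 q)) in *. set (s := S b1 b2 q) in *.
 assert (0 <= P * (b1 * fst q)) by (apply Rmult_le_pos; nra).
 assert (P * (b1 * fst q) <= P * s) by (apply Rmult_le_compat_l; lra).
 assert (P * (b1 * fst q) <= b1 * fst q) by nra.
 rewrite Rmult_assoc. split; [split|]; lra. Qed.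

Lemma f2_range q : quad q -> 0 <= f2 b1 b2 q <= 1 /\ f2 b1 b2 q <= b2 * snd q.
Proof. intros Hq. rewrite f2_eq by auto. pose proof (S_nonneg q Hq) as HS.
 pose proof (psi_bounds _ HS). pose proof (psi_mul _ HS).
 pose proof (exp_pos_le1 _ HS). destruct Hq as [Q1 Q2].
 assert (b2 * snd q <= S b1 b2 q) by (unfold S; nra).
 set (P := psi (S b1 b2 q)) in *. set (s := S b1 b2 q) in *.
 assert (0 <= P * (b2 * snd q)) by (apply Rmult_le_pos; nra).
 assert (P * (b2 * snd q) <= P * s) by (apply Rmult_le_compat_l; lra).
 assert (P * (b2 * snd q) <= b2 * snd q) by nra.
 rewrite Rmult_assoc. split; [split|]; lra. Qed.

Lemma h_quad q : quad q -> quad (h a1 a2 b1 b2 q) /\ fst (h a1 a2 b1 b2 q) <= 8 * b1 * fst q.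
Proof. intros Hq. destruct (f1_range q Hq) as [R1 R1'].
 destruct (f2_range q Hq) as [R2 R2']. unfold h; simpl.
 pose proof (g_bounds a1 _ Ha1 R1). pose proof (g_bounds a2 _ Ha2 R2).
 split. split; simpl; lra. lra. Qed.

Lemma h_axis y : 0 <= y -> h a1 a2 b1 b2 (0, y) = (0, g a2 (1 - exp (- (b2 * y)))).
Proof. intros Hy. assert (Hq : quad (0,y)) by (split; simpl; lra).
 unfold h. rewrite f1_eq, f2_eq by auto. simpl. rewrite Rmult_0_r, g_zero. f_equal.
 f_equal. unfold S; simpl. replace (b1 * 0 + b2 * y) with (b2 * y) by ring.
 rewrite Rmult_assoc. apply psi_mul. nra. Qed.

Lemma f2_cont y : 0 <= y -> forall eps, 0 < eps -> exists del, 0 < del /\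
  forall q, quad q -> fst q < del -> Rabs (snd q - y) < del ->
   Rabs (f2 b1 b2 q - (1 - exp (- (b2 * y)))) < eps.
Proof. intros Hy eps He. destruct (Req_dec y 0).
 { subst. exists (eps / (2 * b2)). split. apply Rdiv_lt_0_compat; lra.
   intros q Hq H1 H2. destruct (f2_range q Hq). rewrite Rmult_0_r, Ropp_0, exp_0, Rminus_diag, Rminus_0_r.
   rewrite Rminus_0_r in H2. destruct Hq.
   rewrite Rabs_right in * by lra.
   assert (HH : b2 * snd q < b2 * (eps / (2 * b2))) by (apply Rmult_lt_compat_l; lra).
   replace (b2 * (eps / (2 * b2))) with (eps/2) in HH by (field; lra). lra. }
 set (K := b1 + b2 + 2 * b1 / (b2 * y)).
 assert (HK : 0 < K). { unfold K. assert (0 < 2 * b1 / (b2 * y)) by (apply Rdiv_lt_0_compat; nra). lra. }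
 exists (Rmin (y/2) (eps / (2 * K))). split. apply Rmin_pos. lra. apply Rdiv_lt_0_compat; lra.
 intros q Hq H1 H2. pose proof (Rmin_l (y/2) (eps / (2 * K))). pose proof (Rmin_r (y/2) (eps / (2 * K))).
 set (d := Rmin (y / 2) (eps / (2 * K))) in *.
 assert (Hd : d * K <= eps / 2). { replace (eps/2) with (eps / (2 * K) * K) by (field; lra).
   apply Rmult_le_compat_r; lra. }
 destruct Hq as [Q1 Q2]. apply Rabs_def2 in H2 as H2'.
 assert (HS : 0 < S b1 b2 q) by (unfold S; nra).
 rewrite f2_eq by (split; auto).
 set (s := S b1 b2 q) in *. set (w := b2 * snd q / s).
 assert (Hw : w * s = b2 * snd q) by (unfold w; field; lra).
 assert (Hw1 : (1 - w) * s = b1 * fst q) by (unfold s, S in *; lra).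
 assert (0 <= w <= 1). { split. unfold w. apply Rmult_le_pos. nra. left; apply Rinv_0_lt_compat; lra. nra. }
 replace (psi s * b2 * snd q) with ((psi s * s) * w) by (transitivity (psi s * (w * s)); [ring | rewrite Hw; ring]).
 rewrite psi_mul by lra.
 pose proof (exp_lip s (b2 * y) ltac:(lra) ltac:(nra)).
 pose proof (exp_pos_le1 s ltac:(lra)).
 assert (Hs1 : Rabs (s - b2 * y) <= b1 * fst q + b2 * Rabs (snd q - y)).
 { unfold s, S. replace (b1 * fst q + b2 * snd q - b2 * y) with (b1 * fst q + b2 * (snd q - y)) by ring.
   eapply Rle_trans. apply Rabs_triang. rewrite !Rabs_mult, (Rabs_right b1), (Rabs_right b2), (Rabs_right (fst q)) by lra. lra. }
 assert (Hw2 : (1 - w) * (b2 * y) <= 2 * (b1 * fst q)).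
 { assert (b2 * y <= 2 * s) by (unfold s, S; nra). nra. }
 assert (Hw3 : 1 - w <= 2 * b1 / (b2 * y) * fst q).
 { apply (Rmult_le_reg_r (b2 * y)). nra. replace (2 * b1 / (b2 * y) * fst q * (b2 * y)) with (2 * (b1 * fst q)) by (field; nra). lra. }
 assert (Rabs ((1 - exp (- s)) * w - (1 - exp (- (b2 * y)))) <= Rabs (exp (-s) - exp (-(b2*y))) + (1 - w)).
 { replace ((1 - exp (- s)) * w - (1 - exp (- (b2 * y)))) with ((exp (-(b2*y)) - exp (-s)) - (1 - exp (-s)) * (1 - w)) by ring.
   eapply Rle_trans. apply Rabs_triang. rewrite Rabs_Ropp. rewrite Rabs_minus_sym.
   rewrite Rabs_mult, (Rabs_right (1 - exp (-s))), (Rabs_right (1 - w)) by lra. nra. }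
 assert (fst q * (2 * b1 / (b2 * y)) <= d * (2 * b1 / (b2 * y))).
 { apply Rmult_le_compat_r. left; apply Rdiv_lt_0_compat; nra. lra. }
 assert (b1 * fst q + b2 * Rabs (snd q - y) + 2 * b1 / (b2 * y) * fst q < d * K).
 { unfold K. assert (b1 * fst q < b1 * d) by (apply Rmult_lt_compat_l; lra).
   assert (b2 * Rabs (snd q - y) < b2 * d) by (apply Rmult_lt_compat_l; lra). nra. }
 lra. Qed.

Lemma h_cont y : 0 <= y -> forall eps, 0 < eps -> exists del, 0 < del /\
  forall q, quad q -> fst q < del -> Rabs (snd q - y) < del ->
   fst (h a1 a2 b1 b2 q) < eps /\
   Rabs (snd (h a1 a2 b1 b2 q) - snd (h a1 a2 b1 b2 (0, y))) < eps.
Proof. intros Hy eps He. rewrite h_axis by auto. simpl.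
 set (z := 1 - exp (- (b2 * y))).
 assert (Hz : 0 <= z < 1). { unfold z. pose proof (exp_pos_le1 (b2 * y) ltac:(nra)). lra. }
 destruct (g_cont a2 z Ha2 Hz eps He) as [dg [Hdg Hg]].
 destruct (f2_cont y Hy dg Hdg) as [df [Hdf Hf]].
 exists (Rmin df (eps / (16 * b1))). split. apply Rmin_pos; auto. apply Rdiv_lt_0_compat; lra.
 intros q Hq H1 H2. pose proof (Rmin_l df (eps / (16 * b1))). pose proof (Rmin_r df (eps / (16 * b1))).
 split.
 - destruct (h_quad q Hq) as [_ Hh]. 
   assert (HH : 8 * b1 * fst q <= 8 * b1 * (eps / (16 * b1))). { apply Rmult_le_compat_l. lra. destruct Hq; lra. }
   replace (8 * b1 * (eps / (16 * b1))) with (eps / 2) in HH by (field; lra). unfold h in Hh; simpl in Hh. lra.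
 - unfold h; simpl. apply Hg. apply f2_range; auto. apply Hf; auto; lra.
Qed.

End F.

Lemma bernoulli t n : 0 <= t <= 1 -> 1 - INR n * t <= (1 - t) ^ n.
Proof. intros Ht. induction n. simpl. lra.
 rewrite S_INR. simpl. assert (0 <= 1 - t) by lra.
 destruct (Rle_dec 0 (1 - INR n * t)).
 - assert ((1 - t) * (1 - INR n * t) <= (1 - t) * (1-t)^n) by (apply Rmult_le_compat_l; lra).
   pose proof (pos_INR n). nra.
 - pose proof (pow_le (1-t) n H). pose proof (pos_INR n). nra. Qed.

Section I.
Variables a1 a2 b1 b2 : R.
Hypothesis Hb1 : 0 < b1.
Hypothesis Hb2 : 0 < b2.
Hypothesis Ha1 : 0 <= a1 < 1.
Hypothesis Ha2 : 0 <= a2 < 1.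

Lemma iter_quad n q : quad q -> quad (h_iter a1 a2 b1 b2 n q).
Proof. intros Hq. induction n. simpl; auto. simpl. apply h_quad; auto. Qed.

Lemma axis_iter x0 n : 0 <= x0 -> h_iter a1 a2 b1 b2 n (0, x0) = (0, snd (h_iter a1 a2 b1 b2 n (0, x0)))
  /\ 0 <= snd (h_iter a1 a2 b1 b2 n (0, x0)).
Proof. intros Hx. induction n. simpl. auto.
 destruct IHn as [E P].
 change (h_iter a1 a2 b1 b2 (Datatypes.S n) (0, x0)) with (h a1 a2 b1 b2 (h_iter a1 a2 b1 b2 n (0, x0))).
 rewrite E. rewrite h_axis by auto. simpl. split. auto.
 apply g_bounds; auto. pose proof (exp_pos_le1 (b2 * snd (h_iter a1 a2 b1 b2 n (0, x0))) ltac:(nra)). lra. Qed.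

Lemma iter_cont x0 : 0 <= x0 -> forall n eps, 0 < eps -> exists del, 0 < del /\
  forall q, quad q -> fst q < del -> Rabs (snd q - x0) < del ->
   fst (h_iter a1 a2 b1 b2 n q) < eps /\
   Rabs (snd (h_iter a1 a2 b1 b2 n q) - snd (h_iter a1 a2 b1 b2 n (0, x0))) < eps.
Proof. intros Hx n. induction n; intros eps He.
 - exists eps. split. auto. intros q Hq H1 H2. simpl. auto.
 - destruct (axis_iter x0 n Hx) as [E P].
   set (y := snd (h_iter a1 a2 b1 b2 n (0, x0))) in *.
   destruct (h_cont a1 a2 b1 b2 Hb1 Hb2 Ha1 Ha2 y P eps He) as [d1 [Hd1 Hc]].
   destruct (IHn d1 Hd1) as [d [Hd Hi]]. exists d. split. auto.
   intros q Hq H1 H2. destruct (Hi q Hq H1 H2) as [I1 I2].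
   simpl. rewrite E. fold y in I2. apply Hc; auto. apply iter_quad; auto. Qed.

Lemma iter_cont_all x0 : 0 <= x0 -> forall n eps, 0 < eps -> exists del, 0 < del /\
  forall q, quad q -> fst q < del -> Rabs (snd q - x0) < del -> forall j, (j <= n)%nat ->
   fst (h_iter a1 a2 b1 b2 j q) < eps /\
   Rabs (snd (h_iter a1 a2 b1 b2 j q) - snd (h_iter a1 a2 b1 b2 j (0, x0))) < eps.
Proof. intros Hx n. induction n; intros eps He.
 - destruct (iter_cont x0 Hx 0 eps He) as [d [Hd Hc]]. exists d. split; auto.
   intros q Hq H1 H2 j Hj. assert (j = 0%nat) by lia. subst. auto.
 - destruct (iter_cont x0 Hx (Datatypes.S n) eps He) as [d [Hd Hc]].
   destruct (IHn eps He) as [d' [Hd' Hc']].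
   exists (Rmin d d'). split. apply Rmin_pos; auto.
   intros q Hq H1 H2 j Hj. pose proof (Rmin_l d d'). pose proof (Rmin_r d d').
   destruct (Nat.le_succ_r j n) as [A _]. destruct (A Hj).
   apply Hc'; auto; lra. subst. apply Hc; auto; lra. Qed.

Lemma h1_lower q : quad q -> b1 * fst q <= 1/2 ->
  fst q * ((1 - a1) * b1 * psi (b2 * snd q) * exp (- (b1 * fst q)) * (1 - b1 * fst q) ^ 3)
  <= fst (h a1 a2 b1 b2 q).
Proof. intros Hq Hs. unfold h; cbn [fst].
 destruct (f1_range b1 b2 Hb1 Hb2 q Hq) as [[R0 R1] R2].
 pose proof (f1_eq b1 b2 Hb1 Hb2 q Hq) as E.
 set (x := f1 b1 b2 q) in *.
 pose proof (g_lower a1 x Ha1 ltac:(lra)).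
 destruct Hq as [Q1 Q2].
 assert (HS : S b1 b2 q = b2 * snd q + b1 * fst q) by (unfold S; ring).
 pose proof (psi_shift (b2 * snd q) (b1 * fst q) ltac:(nra) ltac:(nra)) as Hp.
 rewrite <- HS in Hp.
 pose proof (psi_bounds (b2 * snd q) ltac:(nra)).
 pose proof (exp_pos_le1 (b1 * fst q) ltac:(nra)).
 set (L := psi (b2 * snd q) * exp (- (b1 * fst q)) * (b1 * fst q)).
 assert (HL0 : 0 <= L) by (unfold L; apply Rmult_le_pos; [nra|nra]).
 assert (HL : L <= x). { rewrite E. unfold L. replace (psi (S b1 b2 q) * b1 * fst q) with (psi (S b1 b2 q) * (b1 * fst q)) by ring.
   apply Rmult_le_compat_r; nra. }
 assert (HM : (1 - b1 * fst q) ^ 3 <= (1 - x) ^ 3) by (apply pow_incr; lra).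
 assert (HM0 : 0 <= (1 - b1 * fst q) ^ 3) by (apply pow_le; lra).
 assert (L * (1 - b1 * fst q) ^ 3 <= x * (1 - x) ^ 3) by (apply Rmult_le_compat; auto).
 assert ((1 - a1) * (L * (1 - b1 * fst q) ^ 3) <= (1 - a1) * (x * (1 - x) ^ 3)) by (apply Rmult_le_compat_l; lra).
 replace (fst q * ((1 - a1) * b1 * psi (b2 * snd q) * exp (- (b1 * fst q)) * (1 - b1 * fst q) ^ 3))
   with ((1 - a1) * (L * (1 - b1 * fst q) ^ 3)) by (unfold L; ring).
 rewrite Rmult_assoc in H. lra. Qed.

Lemma LB_cmp q y d : quad q -> 0 <= y -> 0 <= d -> fst q <= d -> Rabs (snd q - y) <= d ->
  (b2 + 4 * b1) * d <= 1/2 ->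
  (1 - a1) * b1 * psi (b2 * y) * (1 - (b2 + 4 * b1) * d) <=
  (1 - a1) * b1 * psi (b2 * snd q) * exp (- (b1 * fst q)) * (1 - b1 * fst q) ^ 3.
Proof. intros [Q1 Q2] Hy Hd H1 H2 HC.
 pose proof (psi_lower (b2 * y) (b2 * snd q) ltac:(nra) ltac:(nra)) as Hp.
 pose proof (psi_bounds (b2 * y) ltac:(nra)) as Hpb.
 replace (b2 * snd q - b2 * y) with (b2 * (snd q - y)) in Hp by ring.
 rewrite Rabs_mult, (Rabs_right b2) in Hp by lra.
 pose proof (exp_neg_ge (b2 * Rabs (snd q - y))).
 set (P0 := psi (b2 * y)) in *. set (Pq := psi (b2 * snd q)) in *.
 assert (A1 : P0 * (1 - b2 * d) <= Pq).
 { assert (b2 * Rabs (snd q - y) <= b2 * d) by (apply Rmult_le_compat_l; lra). nra. }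
 pose proof (exp_neg_ge (b1 * fst q)).
 assert (A2 : 1 - b1 * d <= exp (- (b1 * fst q))) by nra.
 assert (A3 : (1 - b1 * d)^3 <= (1 - b1 * fst q)^3) by (apply pow_incr; nra).
 assert (A4 : 1 - 3 * (b1 * d) <= (1 - b1 * d)^3).
 { assert (b1 * d <= 1/2) by nra.
   set (t := b1 * d) in *. assert (0 <= t) by (unfold t; nra).
   assert (0 <= t * t * (3 - t)) by (apply Rmult_le_pos; nra). simpl. nra. }
 assert (E1 : b2 * d + 4 * (b1 * d) <= 1/2) by (replace (b2 * d + 4 * (b1 * d)) with ((b2 + 4 * b1) * d) by ring; lra).
 assert (E2 : 0 <= b2 * d) by nra. assert (E3 : 0 <= b1 * d) by nra.
 assert (E4 : 0 <= P0 * (1 - b2 * d)) by (apply Rmult_le_pos; lra).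
 assert (B1 : P0 * (1 - b2 * d) * (1 - b1 * d) <= Pq * exp (- (b1 * fst q))).
 { apply Rmult_le_compat; nra. }
 assert (B2 : P0 * (1 - b2 * d) * (1 - b1 * d) * (1 - 3 * (b1 * d)) <= Pq * exp (- (b1 * fst q)) * (1 - b1 * fst q)^3).
 { apply Rmult_le_compat; try lra. apply Rmult_le_pos; lra. }
 assert (B3 : P0 * (1 - (b2 + 4 * b1) * d) <= P0 * (1 - b2 * d) * (1 - b1 * d) * (1 - 3 * (b1 * d))).
 { set (u := b2 * d). set (v := b1 * d). assert (0 <= u) by (unfold u; nra). assert (0 <= v) by (unfold v; nra).
   replace ((b2 + 4 * b1) * d) with (u + 4 * v) in * by (unfold u, v; ring).
   assert (v <= 1/8) by lra.
   assert (0 <= u * v * (4 - 3 * v)) by (apply Rmult_le_pos; [apply Rmult_le_pos|]; lra).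
   assert (0 <= v * v) by nra.
   assert (1 - (u + 4 * v) <= (1 - u) * (1 - v) * (1 - 3 * v)) by nra.
   replace (P0 * (1 - u) * (1 - v) * (1 - 3 * v)) with (P0 * ((1 - u) * (1 - v) * (1 - 3 * v))) by ring.
   apply Rmult_le_compat_l; lra. }
 assert (0 <= (1 - a1) * b1) by nra.
 replace ((1 - a1) * b1 * P0 * (1 - (b2 + 4 * b1) * d)) with (((1 - a1) * b1) * (P0 * (1 - (b2 + 4 * b1) * d))) by ring.
 replace ((1 - a1) * b1 * Pq * exp (- (b1 * fst q)) * (1 - b1 * fst q) ^ 3) with
  (((1 - a1) * b1) * (Pq * exp (- (b1 * fst q)) * (1 - b1 * fst q) ^ 3)) by ring.
 apply Rmult_le_compat_l; lra. Qed.

Lemma prod_psi_bounds x0 n : 0 <= x0 -> 0 < prod_psi a1 a2 b1 b2 x0 n <= 1.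
Proof. intros Hx. induction n. simpl; lra. simpl.
 destruct (axis_iter x0 n Hx) as [_ P].
 pose proof (psi_bounds (b2 * snd (h_iter a1 a2 b1 b2 n (0, x0))) ltac:(nra)).
 split. apply Rmult_lt_0_compat; lra. nra. Qed.

Lemma block x0 n Q : 0 <= x0 -> 0 < Q -> ((1 - a1) * b1) ^ n * prod_psi a1 a2 b1 b2 x0 n > 2 * Q ->
  exists del, 0 < del /\ forall p, quad p -> fst p < del -> Rabs (snd p - x0) < del ->
   Q * fst p <= fst (h_iter a1 a2 b1 b2 n p).
Proof. intros Hx HQ Hn.
 set (C := b2 + 4 * b1). assert (HC : 0 < C) by (unfold C; lra).
 pose proof (pos_INR n) as Hn0.
 set (d := 1 / (2 * C * (INR n + 1))).
 assert (Hd : 0 < d) by (unfold d; apply Rdiv_lt_0_compat; nra).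
 assert (Hd1 : C * d * (INR n + 1) = 1/2) by (unfold d; field; lra).
 assert (HCd : C * d <= 1/2) by nra.
 assert (Hb1d : b1 * d <= 1/2) by (unfold C in *; nra).
 destruct (iter_cont_all x0 Hx n d Hd) as [del [Hdel Hc]].
 exists del. split. auto. intros p Hp H1 H2.
 assert (Hm : forall m, (m <= n)%nat -> fst p * ((1 - a1) * b1) ^ m * prod_psi a1 a2 b1 b2 x0 m * (1 - C * d) ^ m
   <= fst (h_iter a1 a2 b1 b2 m p)).
 { induction m; intros Hmn. simpl. lra.
   assert (Hm' : (m <= n)%nat) by lia. specialize (IHm Hm').
   destruct (Hc p Hp H1 H2 m Hm') as [J1 J2].
   set (q := h_iter a1 a2 b1 b2 m p) in *.
   assert (Hq : quad q) by (apply iter_quad; auto).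
   destruct (axis_iter x0 m Hx) as [_ Py].
   set (y := snd (h_iter a1 a2 b1 b2 m (0, x0))) in *.
   change (h_iter a1 a2 b1 b2 (Datatypes.S m) p) with (h a1 a2 b1 b2 q).
   change (prod_psi a1 a2 b1 b2 x0 (Datatypes.S m)) with (prod_psi a1 a2 b1 b2 x0 m * psi (b2 * y)).
   pose proof (h1_lower q Hq ltac:(destruct Hq; nra)) as L1.
   pose proof (LB_cmp q y d Hq Py ltac:(lra) ltac:(lra) ltac:(lra) ltac:(fold C; lra)) as L2.
   fold C in L2.
   pose proof (prod_psi_bounds x0 m Hx).
   pose proof (psi_bounds (b2 * y) ltac:(nra)).
   assert (0 <= (1 - a1) * b1) by nra.
   assert (0 <= ((1 - a1) * b1) ^ m) by (apply pow_le; auto).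
   assert (0 <= (1 - C * d) ^ m) by (apply pow_le; lra).
   destruct Hp as [P1 P2].
   assert (0 <= fst p * ((1 - a1) * b1) ^ m * prod_psi a1 a2 b1 b2 x0 m * (1 - C * d) ^ m).
   { repeat apply Rmult_le_pos; lra. }
   assert (0 <= (1 - a1) * b1 * psi (b2 * y) * (1 - C * d)).
   { repeat apply Rmult_le_pos; lra. }
   assert (fst p * ((1 - a1) * b1) ^ m * prod_psi a1 a2 b1 b2 x0 m * (1 - C * d) ^ m *
      ((1 - a1) * b1 * psi (b2 * y) * (1 - C * d)) <=
      fst q * ((1 - a1) * b1 * psi (b2 * snd q) * exp (- (b1 * fst q)) * (1 - b1 * fst q) ^ 3)).
   { apply Rmult_le_compat; auto. }
   simpl pow. 
   replace (fst p * ((1 - a1) * b1 * ((1 - a1) * b1) ^ m) *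
     (prod_psi a1 a2 b1 b2 x0 m * psi (b2 * y)) * ((1 - C * d) * (1 - C * d) ^ m))
   with (fst p * ((1 - a1) * b1) ^ m * prod_psi a1 a2 b1 b2 x0 m * (1 - C * d) ^ m *
      ((1 - a1) * b1 * psi (b2 * y) * (1 - C * d))) by ring.
   lra. }
 specialize (Hm n (Nat.le_refl n)).
 pose proof (bernoulli (C * d) n ltac:(nra)).
 assert (1/2 <= (1 - C * d) ^ n) by nra.
 destruct Hp as [P1 P2].
 assert (2 * Q * fst p * (1/2) <= fst p * ((1 - a1) * b1) ^ n * prod_psi a1 a2 b1 b2 x0 n * (1 - C * d) ^ n).
 { replace (fst p * ((1 - a1) * b1) ^ n * prod_psi a1 a2 b1 b2 x0 n * (1 - C * d) ^ n) with
     ((fst p * (((1 - a1) * b1) ^ n * prod_psi a1 a2 b1 b2 x0 n)) * (1 - C * d) ^ n) by ring.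
   apply Rmult_le_compat; try lra. nra. nra. }
 lra. Qed.

End I.

Lemma lub_ok (E : R -> Prop) : (exists x, E x) -> bound E -> is_lub E (Rsup E).
Proof. intros He Hb. destruct (completeness E Hb He) as [m Hm]. unfold Rsup.
 apply epsilon_spec. exists m; auto. Qed.

Lemma glb_ok (E : R -> Prop) : (exists x, E x) -> (exists m, forall x, E x -> m <= x) -> is_glb E (Rinf E).
Proof. intros [x0 He] [m Hm]. set (E' := fun y => E (- y)).
 assert (Hb : bound E'). { exists (- m). intros y Hy. unfold E' in Hy. specialize (Hm _ Hy). lra. }
 assert (Hex : exists y, E' y). { exists (- x0). unfold E'. rewrite Ropp_involutive. auto. }
 destruct (completeness E' Hb Hex) as [M [HM1 HM2]]. unfold Rinf. apply epsilon_spec.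
 exists (- M). split.
 - intros x Hx. assert (E' (- x)) by (unfold E'; rewrite Ropp_involutive; auto). specialize (HM1 _ H). lra.
 - intros b Hb'. assert (M <= - b). { apply HM2. intros y Hy. unfold E' in Hy. specialize (Hb' _ Hy). lra. } lra. Qed.

Lemma bernoulli_plus t n : 0 <= t -> 1 + INR n * t <= (1 + t) ^ n.
Proof. intros Ht. induction n. simpl. lra. rewrite S_INR. simpl.
 pose proof (pos_INR n). assert (0 <= INR n * t) by nra. nra. Qed.

Lemma h_iter_add a1 a2 b1 b2 n k p : h_iter a1 a2 b1 b2 (n + k) p = h_iter a1 a2 b1 b2 k (h_iter a1 a2 b1 b2 n p).
Proof. induction k. rewrite Nat.add_0_r. reflexivity. rewrite Nat.add_succ_r. simpl. rewrite IHk. reflexivity. Qed.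

Section M.
Variables a1 a2 b1 b2 : R.
Hypothesis Hb1 : 0 < b1.
Hypothesis Hb2 : 0 < b2.
Hypothesis Ha1 : 0 <= a1 < 1.
Hypothesis Ha2 : 0 <= a2 < 1.

Lemma pbar_ok : is_lub (fun y => exists x, 0 <= x <= 1 /\ y = g a2 x) (pbar a2).
Proof. apply lub_ok. exists (g a2 0). exists 0. split; [lra|auto].
 exists 8. intros y [x [Hx ->]]. pose proof (g_bounds a2 x Ha2 Hx). lra. Qed.

Lemma pbar_nonneg : 0 <= pbar a2.
Proof. destruct pbar_ok as [H _]. rewrite <- (g_zero a2). apply H. exists 0. split; [lra|auto]. Qed.

Lemma Psi_bounds x n : 0 <= x -> 0 < Psi a1 a2 b1 b2 x n <= 1.
Proof. intros Hx. unfold Psi, Rpower. split. apply exp_pos.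
 pose proof (prod_psi_bounds a1 a2 b1 b2 Hb1 Hb2 Ha2 x n Hx).
 assert (ln (prod_psi a1 a2 b1 b2 x n) <= 0). { rewrite <- ln_1. apply ln_le; lra. }
 assert (0 <= 1 / INR n). { destruct n. simpl. unfold Rdiv. rewrite Rinv_0. lra.
   apply Rlt_le, Rdiv_lt_0_compat. lra. apply lt_0_INR. lia. }
 apply Rle_trans with (exp 0); [|rewrite exp_0; lra].
 destruct (Req_dec (1 / INR n * ln (prod_psi a1 a2 b1 b2 x n)) 0) as [E|E].
 rewrite E; lra. left. apply exp_increasing. nra. Qed.

Definition tail x N := fun z => exists n, (N <= n)%nat /\ z = Psi a1 a2 b1 b2 x n.
Definition Tset x := fun y => exists N, y = Rinf (tail x N).

Lemma tail_ok x N : 0 <= x -> is_glb (tail x N) (Rinf (tail x N)) /\ 0 <= Rinf (tail x N) <= 1.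
Proof. intros Hx. assert (G : is_glb (tail x N) (Rinf (tail x N))).
 { apply glb_ok. exists (Psi a1 a2 b1 b2 x N). exists N. split; auto.
   exists 0. intros z [n [_ ->]]. pose proof (Psi_bounds x n Hx). lra. }
 split; auto. destruct G as [G1 G2]. split.
 apply G2. intros z [n [_ ->]]. pose proof (Psi_bounds x n Hx). lra.
 pose proof (G1 (Psi a1 a2 b1 b2 x N) ltac:(exists N; split; auto)). pose proof (Psi_bounds x N Hx). lra. Qed.

Lemma liminf_ok x : 0 <= x -> is_lub (Tset x) (liminf (Psi a1 a2 b1 b2 x)) /\ 0 <= liminf (Psi a1 a2 b1 b2 x).
Proof. intros Hx. assert (L : is_lub (Tset x) (liminf (Psi a1 a2 b1 b2 x))).
 { unfold liminf. apply lub_ok. exists (Rinf (tail x 0)). exists 0%nat. auto.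
   exists 1. intros y [N ->]. apply (tail_ok x N Hx). }
 split; auto. destruct L as [L1 L2]. pose proof (L1 (Rinf (tail x 0)) ltac:(exists 0%nat; auto)).
 pose proof (tail_ok x 0 Hx). lra. Qed.

Hypothesis Hsig : (1 - a1) * b1 * sigma_T a1 a2 b1 b2 > 1.

Lemma sigma_le x : 0 <= x <= pbar a2 -> 0 <= sigma_T a1 a2 b1 b2 <= liminf (Psi a1 a2 b1 b2 x).
Proof. intros Hx. pose proof pbar_nonneg.
 assert (G : is_glb (fun y => exists x, 0 <= x <= pbar a2 /\ y = liminf (Psi a1 a2 b1 b2 x)) (sigma_T a1 a2 b1 b2)).
 { apply glb_ok. exists (liminf (Psi a1 a2 b1 b2 0)). exists 0. split; [lra|auto].
   exists 0. intros y [z [Hz ->]]. apply liminf_ok; lra. }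
 destruct G as [G1 G2]. split.
 apply G2. intros y [z [Hz ->]]. apply liminf_ok; lra.
 apply G1. exists x. split; auto. Qed.

Lemma growth x Q : 0 <= x <= pbar a2 -> 0 < Q ->
  exists n, ((1 - a1) * b1) ^ n * prod_psi a1 a2 b1 b2 x n > Q.
Proof. intros Hx HQ. destruct (sigma_le x Hx) as [S0 SL].
 set (phi := (1 - a1) * b1) in *. assert (Hphi : 0 < phi) by (unfold phi; nra).
 set (sg := sigma_T a1 a2 b1 b2) in *.
 set (th := (sg + / phi) / 2).
 assert (Hinv : / phi < sg). { apply (Rmult_lt_reg_l phi). auto. rewrite Rinv_r by lra. lra. }
 assert (Hth0 : 0 < th) by (unfold th; pose proof (Rinv_0_lt_compat phi Hphi); lra).
 assert (Hth1 : th < sg) by (unfold th; lra).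
 assert (Hpt : 1 < phi * th). { unfold th. replace (phi * ((sg + / phi) / 2)) with ((phi * sg + 1)/2) by (field; lra). lra. }
 destruct (liminf_ok x ltac:(lra)) as [[L1 L2] _].
 assert (HN : exists N, th < Rinf (tail x N)).
 { apply NNPP. intro Hn. assert (liminf (Psi a1 a2 b1 b2 x) <= th).
   { apply L2. intros y [N ->]. apply Rnot_lt_le. intro. apply Hn. exists N. auto. } lra. }
 destruct HN as [N HN].
 set (t := phi * th - 1). assert (Ht : 0 < t) by (unfold t; lra).
 destruct (INR_unbounded (Q / t)) as [M HM].
 exists (N + M + 1)%nat. set (n := (N + M + 1)%nat).
 assert (HPn : th < Psi a1 a2 b1 b2 x n).
 { destruct (tail_ok x N ltac:(lra)) as [[T1 _] _]. assert (Rinf (tail x N) <= Psi a1 a2 b1 b2 x n).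
   apply T1. exists n. split. unfold n; lia. auto. lra. }
 pose proof (prod_psi_bounds a1 a2 b1 b2 Hb1 Hb2 Ha2 x n ltac:(lra)) as Pb.
 set (P := prod_psi a1 a2 b1 b2 x n) in *.
 assert (Hn0 : 0 < INR n) by (apply lt_0_INR; unfold n; lia).
 unfold Psi, Rpower in HPn. fold P in HPn. rewrite <- (exp_ln th Hth0) in HPn.
 apply exp_lt_inv in HPn.
 assert (INR n * ln th < ln P).
 { replace (ln P) with (INR n * (1 / INR n * ln P)) by (field; lra). apply Rmult_lt_compat_l; lra. }
 assert (th ^ n < P). { rewrite <- (Rpower_pow n th Hth0). unfold Rpower. rewrite <- (exp_ln P) by lra.
   apply exp_increasing. lra. }
 assert (phi ^ n * th ^ n < phi ^ n * P) by (apply Rmult_lt_compat_l; [apply pow_lt|]; lra).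
 rewrite <- Rpow_mult_distr in H1.
 replace (phi * th) with (1 + t) in H1 by (unfold t; ring).
 pose proof (bernoulli_plus t n ltac:(lra)).
 assert (INR M <= INR n) by (apply le_INR; unfold n; lia).
 assert (Q < INR M * t). { apply (Rmult_lt_reg_r (/ t)). apply Rinv_0_lt_compat; lra.
   replace (INR M * t * / t) with (INR M) by (field; lra). exact HM. }
 assert (INR M * t <= INR n * t) by (apply Rmult_le_compat_r; lra).
 lra. Qed.

Lemma uniform Q : 0 < Q -> exists N del, 0 < del /\ forall p, quad p -> fst p < del ->
  0 <= snd p <= pbar a2 -> exists k, (k <= N)%nat /\ Q * fst p <= fst (h_iter a1 a2 b1 b2 k p).
Proof. intros HQ.
 set (Prop_nd := fun x (nd : nat * R) => 0 < snd nd /\ forall p, quad p -> fst p < snd nd ->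
     Rabs (snd p - x) < snd nd -> Q * fst p <= fst (h_iter a1 a2 b1 b2 (fst nd) p)).
 assert (Hx : forall x, 0 <= x <= pbar a2 -> exists nd, Prop_nd x nd).
 { intros x Hx. destruct (growth x (2 * Q) Hx ltac:(lra)) as [n Hn].
   destruct (block a1 a2 b1 b2 Hb1 Hb2 Ha1 Ha2 x n Q ltac:(lra) HQ Hn) as [d [Hd Hb]].
   exists (n, d). split; auto. }
 set (sel := fun x => epsilon (inhabits (0%nat, 1)) (Prop_nd x)).
 set (gv := fun x => if Rlt_dec 0 (snd (sel x)) then Rmin (snd (sel x)) (/ (INR (fst (sel x)) + 1)) else 1).
 assert (gpos : forall x, 0 < gv x).
 { intros x. unfold gv. destruct (Rlt_dec 0 (snd (sel x))). apply Rmin_pos; auto.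
   apply Rinv_0_lt_compat. pose proof (pos_INR (fst (sel x))). lra. lra. }
 set (delta := fun x => mkposreal (gv x) (gpos x)).
 destruct (compactness_value_1d 0 (pbar a2) delta) as [d Hd].
 destruct (INR_unbounded (/ d)) as [N HN].
 exists N, d. split. apply cond_pos. intros p Hp Hp1 Hp2.
 apply NNPP. intro Hno. apply (Hd (snd p) Hp2). intros [t [Ht [Ht1 Ht2]]]. apply Hno.
 simpl in Ht1, Ht2.
 assert (Hs : Prop_nd t (sel t)) by (apply epsilon_spec; apply Hx; auto).
 destruct Hs as [Hs0 Hs].
 unfold gv in Ht1, Ht2. destruct (Rlt_dec 0 (snd (sel t))); [|lra].
 pose proof (Rmin_l (snd (sel t)) (/ (INR (fst (sel t)) + 1))).
 pose proof (Rmin_r (snd (sel t)) (/ (INR (fst (sel t)) + 1))).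
 exists (fst (sel t)). split.
 - assert (Hk : INR (fst (sel t)) + 1 <= / d).
   { pose proof (pos_INR (fst (sel t))). pose proof (cond_pos d).
     rewrite <- (Rinv_inv (INR (fst (sel t)) + 1)). apply Rinv_le_contravar. auto. lra. }
   assert (INR (fst (sel t)) < INR N) by lra. apply INR_lt in H1. lia.
 - apply Hs; auto. pose proof (cond_pos d). lra. lra.
Qed.

End M.

Theorem mainTheorem19 (a1 a2 b1 b2 : R) (p0 : R * R) :
  0 < b1 -> 0 < b2 ->
  0 <= a1 < 1 -> 0 <= a2 < 1 ->
  (1 - a1) * b1 * sigma_T a1 a2 b1 b2 > 1 ->
  0 < fst p0 < 1 -> 0 < snd p0 < 1 -> fst p0 + snd p0 <= 1 ->
  exists cbar : R, 0 < cbar < fst p0 /\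
    forall c : R, 0 < c <= cbar ->
      exists kbar : nat, forall n : nat,
        fst (h_iter a1 a2 b1 b2 n p0) >= c ->
        exists k : nat, (k <= kbar)%nat /\
          fst (h_iter a1 a2 b1 b2 (n + k) p0) > 3 / (2 * rr a1 a2 b1 b2) * c.
Proof.
 intros Hb1 Hb2 Ha1 Ha2 Hsig P1 P2 P12.
 set (K := 3 / (2 * rr a1 a2 b1 b2)).
 destruct (Rlt_dec K 1) as [HK|HK].
 - exists (fst p0 / 2). split. lra. intros c Hc. exists 0%nat. intros n Hn.
   exists 0%nat. split. lia. rewrite Nat.add_0_r. 
   destruct (Rle_dec 0 K). assert (K * c < c) by nra. lra.
   assert (K * c < 0) by nra. lra.
 - assert (HK1 : 1 <= K) by lra.
   destruct (uniform a1 a2 b1 b2 Hb1 Hb2 Ha1 Ha2 Hsig (K + 1) ltac:(lra)) as [N [del [Hdel HU]]].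
   set (cbar := Rmin (fst p0 / 2) (Rmin (fst p0 / (2 * K)) (del / (2 * K)))).
   pose proof (Rmin_l (fst p0 / 2) (Rmin (fst p0 / (2 * K)) (del / (2 * K)))).
   pose proof (Rmin_r (fst p0 / 2) (Rmin (fst p0 / (2 * K)) (del / (2 * K)))).
   pose proof (Rmin_l (fst p0 / (2 * K)) (del / (2 * K))).
   pose proof (Rmin_r (fst p0 / (2 * K)) (del / (2 * K))).
   fold cbar in H, H0.
   assert (Hc0 : 0 < cbar). { unfold cbar. repeat apply Rmin_pos; apply Rdiv_lt_0_compat; lra. }
   exists cbar. split. split; lra.
   intros c Hc. exists N. intros n Hn.
   destruct (Rlt_dec (K * c) (fst (h_iter a1 a2 b1 b2 n p0))) as [Hbig|Hsmall].
   + exists 0%nat. split. lia. rewrite Nat.add_0_r. lra.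
   + apply Rnot_lt_le in Hsmall.
     assert (Kc1 : K * c <= K * (fst p0 / (2 * K))) by (apply Rmult_le_compat_l; lra).
     assert (Kc2 : K * c <= K * (del / (2 * K))) by (apply Rmult_le_compat_l; lra).
     replace (K * (fst p0 / (2 * K))) with (fst p0 / 2) in Kc1 by (field; lra).
     replace (K * (del / (2 * K))) with (del / 2) in Kc2 by (field; lra).
     destruct n as [|m].
     * simpl in Hsmall. lra.
     * assert (Hq0 : quad p0) by (split; lra).
       pose proof (iter_quad a1 a2 b1 b2 Hb1 Hb2 Ha1 Ha2 m p0 Hq0) as Hqm.
       pose proof (iter_quad a1 a2 b1 b2 Hb1 Hb2 Ha1 Ha2 (Datatypes.S m) p0 Hq0) as Hqn.
       set (p := h_iter a1 a2 b1 b2 (Datatypes.S m) p0) in *.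
       assert (Hp2 : 0 <= snd p <= pbar a2).
       { split. apply Hqn. destruct (pbar_ok a2 Ha2) as [U _]. apply U.
         exists (f2 b1 b2 (h_iter a1 a2 b1 b2 m p0)). split. apply (f2_range b1 b2 Hb1 Hb2 _ Hqm). reflexivity. }
       destruct (HU p Hqn ltac:(lra) Hp2) as [k [Hk Hh]].
       exists k. split. auto. rewrite h_iter_add. fold p.
       assert (K * c <= K * fst p) by (apply Rmult_le_compat_l; lra).
       lra.
Qed.
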